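(* Let $\Gamma$ be a graph of order $n$, minimum degree $\delta>0$ and maximum degree $\Delta\ge 2$. For every integer $j\in\{2-\Delta,\dots,0\}$ and every integer $k\le-\frac{j\delta}{\Delta}$, we have $\gamma_k^o(\Gamma)+\gamma_j^o(\Gamma)\le n$.
   Context: Graphs are finite and simple. For $S\subseteq V$ and $v\in V$, $\delta_S(v)$ is the number of neighbours of $v$ in $S$, $\overline{S}=V\setminus S$, and $\partial(S)$ the set of vertices of $\overline{S}$ with a neighbour in $S$. A nonempty $S$ is an offensive $k$-alliance if $\delta_S(v)\ge\delta_{\overline{S}}(v)+k$ for all $v\in\partial(S)$, and a global offensive $k$-alliance if moreover it is dominating. $\gamma_k^o(\Gamma)$ denotes the minimum cardinality of a global offensive $k$-alliance in $\Gamma$. *)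

(* Defs.v *)
From mathcomp Require Import all_boot all_order all_algebra.
Set Implicit Arguments. Unset Strict Implicit. Unset Printing Implicit Defensive.
Import Order.TTheory GRing.Theory Num.Theory.

Definition simple_graph (T : finType) (e : rel T) : Prop :=
  symmetric e /\ irreflexive e.

Section Alliances.
Variables (T : finType) (e : rel T).

Definition deg (v : T) : nat := #|[set u | e v u]|.

Definition deltaS (S : {set T}) (v : T) : nat := #|[set u in S | e v u]|.

Definition boundary (S : {set T}) : {set T} :=
  [set v in ~: S | [exists u in S, e v u]].

Definition offensive_alliance (k : int) (S : {set T}) : bool :=
  (S != set0) &&
  [forall v in boundary S, ((deltaS S v)%:Z >= (deltaS (~: S) v)%:Z + k)%R].

Definition dominating (S : {set T}) : bool :=
  [forall v in ~: S, [exists u in S, e v u]].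

Definition global_offensive_alliance (k : int) (S : {set T}) : bool :=
  offensive_alliance k S && dominating S.

(* gamma_k^o: minimum cardinality of a global offensive k-alliance.
   Since [set: T] is one whenever T is nonempty, the default #|T| is harmless. *)
Definition gamma_o (k : int) : nat :=
  \big[minn/#|T|]_(S : {set T} | global_offensive_alliance k S) #|S|.

End Alliances.

(* Main.v *)
Require Import Defs.
From mathcomp Require Import all_boot all_order all_algebra.
From mathcomp Require Import zify ring.
Import Order.TTheory GRing.Theory Num.Theory.
Set Implicit Arguments. Unset Strict Implicit. Unset Printing Implicit Defensive.

Section Aux.
Variables (T : finType) (e : rel T).
Hypothesis esym : symmetric e.
Hypothesis eirr : irreflexive e.
Local Open Scope ring_scope.

Definition cut (S : {set T}) : int :=
  \sum_(u in S) \sum_(x in ~: S) (e u x : nat)%:Z.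

Lemma deltaS_sum S v : (deltaS e S v)%:Z = \sum_(u in S) (e v u : nat)%:Z.
Proof.
rewrite /deltaS -sum1_card -natz natr_sum big_mkcond /= [RHS]big_mkcond /=.
apply: eq_bigr => u _; rewrite inE; by case: (u \in S); case: (e v u).
Qed.

Lemma deltaS_setU1 S v : deltaS e (v |: S) v = deltaS e S v.
Proof.
rewrite /deltaS; apply: eq_card => u; rewrite !inE.
by case: (u =P v) => [->|] //; rewrite eirr !andbF.
Qed.

Lemma deltaS_setD1 S v : deltaS e (S :\ v) v = deltaS e S v.
Proof.
rewrite /deltaS; apply: eq_card => u; rewrite !inE.
by case: (u =P v) => [->|] //; rewrite eirr !andbF.
Qed.

Lemma deg_split (S : {set T}) (v : T) : deg e v = (deltaS e S v + deltaS e (~: S) v)%N.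
Proof.
rewrite /deg /deltaS -(cardsID S [set u | e v u]); congr (_ + _)%N; apply: eq_card => u; rewrite !inE andbC //.
Qed.

Lemma cut_add (S : {set T}) (v : T) : v \notin S ->
  cut (v |: S) = cut S + (deltaS e (~: S) v)%:Z - (deltaS e S v)%:Z.
Proof.
move=> vS.
have hC : ~: S = v |: ~: (v |: S).
  apply/setP => x; rewrite !inE; case: (x =P v) => [->|] //=; by rewrite (negPf vS).
have vC : v \notin ~: (v |: S) by rewrite !inE eqxx.
have hd : \sum_(x in ~: S) (e v x : nat)%:Z = \sum_(x in ~: (v |: S)) (e v x : nat)%:Z.
  by rewrite hC big_setU1 //= eirr add0r.
rewrite /cut big_setU1 //=.
rewrite [in RHS]hC.
under [in RHS]eq_bigr do rewrite big_setU1 //=.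
rewrite -hC big_split /= !deltaS_sum hd.
under [in RHS]eq_bigr do rewrite esym.
ring. Qed.

End Aux.

Lemma bigmin_le (T : finType) (P : pred T) (F : T -> nat) x0 i :
  P i -> (\big[minn/x0]_(j | P j) F j <= F i)%N.
Proof.
move=> h; have : i \in index_enum T by rewrite mem_index_enum.
elim: (index_enum T) => [//|a s IH]; rewrite inE big_cons => /orP [/eqP <-|/IH hs].
  by rewrite h geq_minl.
by case: (P a) => //; rewrite geq_min hs orbT.
Qed.

Lemma gamma_le (T : finType) (e : rel T) k S :
  global_offensive_alliance e k S -> (gamma_o e k <= #|S|)%N.
Proof. by move=> h; rewrite /gamma_o; apply: bigmin_le. Qed.

Theorem mainTheorem6 (T : finType) (e : rel T) (mindeg maxdeg : nat) (j k : int) :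
  simple_graph e ->
  (forall v, mindeg <= deg e v)%N -> (exists v, deg e v = mindeg) ->
  (forall v, deg e v <= maxdeg)%N -> (exists v, deg e v = maxdeg) ->
  (0 < mindeg)%N -> (2 <= maxdeg)%N ->
  (2%:Z - maxdeg%:Z <= j)%R -> (j <= 0)%R ->
  ((k%:~R : rat) <= - (j%:~R * mindeg%:R) / maxdeg%:R)%R ->
  (gamma_o e k + gamma_o e j <= #|T|)%N.
Proof.
move=> [esym eirr] hmin [v0 hv0] hmax [v1 hv1] hd hD hj1 hj2 hk.
have hk' : (k * maxdeg%:Z <= - (j * mindeg%:Z))%R.
  rewrite ler_pdivlMr in hk; last by rewrite ltr0n; lia.
  have : ((k * maxdeg%:Z)%:~R <= (- (j * mindeg%:Z))%:~R :> rat)%R.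
    by rewrite !rmorphM /= rmorphN rmorphM /=.
  by rewrite ler_int.
have dD : (mindeg <= maxdeg)%N by rewrite -hv1.
have kj : (k <= - j)%R by nia.
have kd : (k < mindeg%:Z)%R by nia.
pose w (v : T) : int := (Num.max j (1 - (deg e v)%:Z))%R.
pose Phi (S : {set T}) : int := (cut e S + \sum_(u in S) w u)%R.
case: (@Order.TotalTheory.arg_maxP _ _ _ set0 predT Phi erefl).
move=> S _ Smax.
have Hin : forall v, v \notin S ->
  ((deltaS e (~: S) v)%:Z - (deltaS e S v)%:Z + w v <= 0)%R.
  move=> v vS; have := Smax (v |: S) erefl.
  rewrite /Phi cut_add // big_setU1 //=.
  move: (cut e S) (\sum_(u in S) w u)%R (w v) => a b c; lia.
have Hout : forall v, v \in S ->
  (0 <= (deltaS e (~: S) v)%:Z - (deltaS e S v)%:Z + w v)%R.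
  move=> v vS.
  have [S0 vS0 hS] : exists2 S0 : {set T}, v \notin S0 & S = v |: S0.
    by exists (S :\ v); [rewrite !inE eqxx | rewrite setD1K].
  have e1 : deltaS e (~: (v |: S0)) v = deltaS e (~: S0) v.
    rewrite -(deltaS_setU1 eirr (~: (v |: S0))); congr deltaS.
    apply/setP => x; rewrite !inE; case: (x =P v) => [->|] //=; by rewrite (negPf vS0).
  have := Smax S0 erefl.
  rewrite /Phi hS cut_add // big_setU1 //= deltaS_setU1 // e1.
  move: (cut e S0) (\sum_(u in S0) w u)%R (w v) => a b c; lia.
have wge : forall v, (j <= w v /\ 1 - (deg e v)%:Z <= w v)%R.
  move=> v; rewrite /w; case: (lerP j (1 - (deg e v)%:Z)%R) => hm; split; lia.
have wle : forall v, (w v <= - k /\ w v <= (deg e v)%:Z - 1)%R.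
  move=> v; have := hmin v; rewrite /w; case: (lerP j (1 - (deg e v)%:Z)) => _ hm;
  split; lia.
have dsp := deg_split e.
have SnC : forall v, v \notin S -> (0 < deltaS e S v)%N.
  move=> v vS; have := Hin v vS; have := wge v; rewrite (dsp S v); lia.
have SC : forall v, v \in S -> (0 < deltaS e (~: S) v)%N.
  move=> v vS; have := Hout v vS; have := wle v; rewrite (dsp S v); lia.
have pos_ex : forall (X : {set T}) v, (0 < deltaS e X v)%N -> [exists u in X, e v u].
  move=> X v; rewrite /deltaS card_gt0 => /set0Pn [u]; rewrite inE => /andP [uX evu].
  by apply/existsP; exists u; rewrite uX.
have Sne : S != set0.
  apply/set0Pn; case: (boolP (v0 \in S)) => h; first by exists v0.
  have := SnC v0 h; rewrite /deltaS card_gt0 => /set0Pn [u]; rewrite inE => /andP [];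
  by exists u.
have Cne : ~: S != set0.
  apply/set0Pn; case: (boolP (v0 \in S)) => h; last by exists v0; rewrite inE.
  have := SC v0 h; rewrite /deltaS card_gt0 => /set0Pn [u]; rewrite inE => /andP [];
  by exists u.
have GS : global_offensive_alliance e j S.
  apply/andP; split; [apply/andP; split => //|].
    apply/forallP => v; apply/implyP; rewrite inE => /andP [vS _].
    rewrite inE in vS; have := Hin v vS; have := wge v; lia.
  apply/forallP => v; apply/implyP; rewrite inE => vS; exact: pos_ex (SnC v vS).
have GC : global_offensive_alliance e k (~: S).
  apply/andP; split; [apply/andP; split => //|].
    apply/forallP => v; apply/implyP; rewrite inE setCK => /andP [vS _].
    have := Hout v vS; have := wle v; lia.
  apply/forallP => v; apply/implyP; rewrite setCK => vS; exact: pos_ex (SC v vS).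
have := gamma_le GS; have := gamma_le GC; have := cardsC S; lia.
Qed.
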